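(* Let $R$ be a unital subring of $\mathbb C$ closed under complex conjugation that has an essentially unique partition of the unit, and let $E$ be a finite graph. Then every projection in $L_R(E)$ lies in the diagonal $\mathcal D(L_R(E))$.
   Context: A unital subring $R\subseteq\mathbb C$ closed under complex conjugation has an essentially unique partition of the unit if whenever $\lambda_1,\dots,\lambda_n\in R$ satisfy $\sum_{i=1}^n|\lambda_i|^2=1$, all but one of the $\lambda_i$ are zero. A graph $E=(E^0,E^1,r,s)$ has vertices $E^0$, edges $E^1$, and range and source maps $r,s$. A path is a word $e_1\cdots e_n$ with $r(e_i)=s(e_{i+1})$; vertices are paths of length $0$; $E^*$ is the set of finite paths. The Leavitt path algebra $L_R(E)$ is the universal $R$-algebra generated by pairwise orthogonal idempotents $\{v\}_{v\in E^0}$ and $\{e,e^*\}_{e\in E^1}$ with: $e^*f=0$ for $e\ne f$; $e^*e=r(e)$; $s(e)e=e=er(e)$; $e^*s(e)=e^*=r(e)e^*$; and $v=\sum_{e\in s^{-1}(v)}ee^*$ whenever $s^{-1}(v)$ is finite and nonempty. For $\alpha=e_1\cdots e_n$ put $\alpha^*=e_n^*\cdots e_1^*$. $L_R(E)$ carries the conjugate-linear involution $(\lambda\alpha\beta^* )^*=\overline\lambda\beta\alpha^*$. A projection is an element $p$ with $p=p^2=p^*$. The diagonal is $\mathcal D(L_R(E))=\mathrm{span}_R\{\alpha\alpha^*\mid\alpha\in E^*\}$. *)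

(* Defs.v *)
(* Concrete model of the Leavitt path algebra L_R(E):
   formal R-linear combinations of monomials alpha beta^* (pairs of paths),
   multiplied by the Cohn-path-algebra rule, taken modulo the two-sided ideal
   generated by the (CK2) relations v - sum_{s(e)=v} e e^* (and by monomials
   that are not of the form alpha beta^* with alpha, beta paths, r(alpha)=r(beta)). *)
From HB Require Import structures.
From mathcomp Require Import all_boot all_order all_algebra.
Set Implicit Arguments. Unset Strict Implicit. Unset Printing Implicit Defensive.
Import Order.TTheory GRing.Theory Num.Theory.
Local Open Scope ring_scope.

Section Leavitt.
Variables (C : numClosedFieldType) (R : pred C).
Variables (V E : finType) (s r : E -> V).

Definition pth := (V * seq E)%type.

Definition is_pth (p : pth) : bool :=
  match p.2 with
  | [::] => true
  | e :: es => (s e == p.1) && path (fun e f => r e == s f) e es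
  end.

Definition prange (p : pth) : V :=
  if p.2 is e :: es then r (last e es) else p.1.

(* monomial (alpha, beta) stands for alpha beta^* *)
Definition mono := (pth * pth)%type.

Definition good (m : mono) : bool :=
  [&& is_pth m.1, is_pth m.2 & prange m.1 == prange m.2].

(* product (alpha beta^* )(gamma delta^* ) in the Cohn path algebra *)
Definition mmul (m1 m2 : mono) : option mono :=
  let: (a, b) := m1 in let: (g, d) := m2 in
  if (b.1 == g.1) && prefix b.2 g.2 then
    Some ((a.1, a.2 ++ drop (size b.2) g.2), d)
  else if (b.1 == g.1) && prefix g.2 b.2 then
    Some (a, (d.1, d.2 ++ drop (size g.2) b.2))
  else None.

Definition elt := seq (C * mono).

Definition coef (x : elt) (m : mono) : C := \sum_(t <- x | t.2 == m) t.1.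

Definition escale (c : C) (x : elt) : elt := [seq (c * t.1, t.2) | t <- x].

Definition eadd (x y : elt) : elt := x ++ y.

Definition esub (x y : elt) : elt := x ++ escale (-1) y.

Definition tmul (t u : C * mono) : elt :=
  if good t.2 && good u.2 then
    (if mmul t.2 u.2 is Some m then [:: (t.1 * u.1, m)] else [::])
  else [::].

Definition emul (x y : elt) : elt := flatten [seq tmul t u | t <- x, u <- y].

Definition estar (x : elt) : elt := [seq ((t.1)^*, (t.2.2, t.2.1)) | t <- x].

Definition Rcomb (x : elt) : bool := all (fun t => t.1 \in R) x.

Definition ck2 (v : V) : elt :=
  (1, ((v, [::]), (v, [::])))
    :: [seq (-1, ((v, [:: e]), (v, [:: e]))) | e <- enum E & s e == v].

Inductive LI : elt -> Prop :=
| LI_ck2 v : [exists e, s e == v] -> LI (ck2 v)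
| LI_bad c m : ~~ good m -> LI [:: (c, m)]
| LI_add x y : LI x -> LI y -> LI (eadd x y)
| LI_scale c x : c \in R -> LI x -> LI (escale c x)
| LI_lmul a x : Rcomb a -> LI x -> LI (emul a x)
| LI_rmul x a : Rcomb a -> LI x -> LI (emul x a)
| LI_coef x y : coef x =1 coef y -> LI x -> LI y.

(* equality in L_R(E) *)
Definition leq_eq (x y : elt) : Prop := LI (esub x y).

Definition is_projection (p : elt) : Prop :=
  Rcomb p /\ leq_eq (emul p p) p /\ leq_eq (estar p) p.

Definition in_diagonal (p : elt) : Prop :=
  exists d : elt, all (fun t => (t.1 \in R) && (t.2.1 == t.2.2)) d /\ leq_eq p d.

End Leavitt.

Definition eupu (C : numClosedFieldType) (R : pred C) : Prop :=
  forall (n : nat) (l : 'I_n -> C), (forall i, l i \in R) ->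
    \sum_(i < n) `|l i| ^+ 2 = 1 ->
    exists i : 'I_n, forall j : 'I_n, j != i -> l j = 0.

(* Main.v *)
Require Import Defs.
From HB Require Import structures.
From mathcomp Require Import all_boot all_order all_algebra.
From Stdlib Require Import ClassicalEpsilon FunctionalExtensionality.
From mathcomp Require Import ring lra.
Set Implicit Arguments. Unset Strict Implicit. Unset Printing Implicit Defensive.
Import Order.TTheory GRing.Theory Num.Theory.
Local Open Scope ring_scope.

Definition strm (T : Type) := nat -> option T.
Definition strm_eqb T (f g : strm T) : bool :=
  if excluded_middle_informative (f = g) then true else false.
Lemma strm_eqP T : Equality.axiom (@strm_eqb T).
Proof. by move=> f g; rewrite /strm_eqb; case: excluded_middle_informative => H; constructor. Qed.
HB.instance Definition _ T := hasDecEq.Build (strm T) (@strm_eqP T).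

Section Gen.
Variables (C : numClosedFieldType) (T : eqType).
Implicit Types (x y : seq (C * T)).

Definition gcoef x (m : T) : C := \sum_(t <- x | t.2 == m) t.1.
Definition wsum x (F : T -> C) : C := \sum_(t <- x) t.1 * F t.2.

Lemma wsum_uniq x (sq : seq T) F : uniq sq -> {subset map snd x <= sq} ->
  wsum x F = \sum_(m <- sq) gcoef x m * F m.
Proof.
move=> Usq Hsub; rewrite /wsum /gcoef.
under [RHS]eq_bigr => m _ do rewrite mulr_suml big_mkcond /=.
rewrite exchange_big /=; apply: eq_big_seq => t tx.
have tin : t.2 \in sq by apply: Hsub; apply: map_f.
rewrite (bigD1_seq t.2) //= eqxx big1 ?addr0 // => m /negPf.
by rewrite eq_sym => ->.
Qed.

Lemma wsum_eq x y F : gcoef x =1 gcoef y -> wsum x F = wsum y F.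
Proof.
move=> H; set sq := undup (map snd (x ++ y)).
have Usq : uniq sq by apply: undup_uniq.
rewrite (@wsum_uniq x sq) //; last first.
  by move=> m mx; rewrite mem_undup map_cat mem_cat mx.
rewrite (@wsum_uniq y sq) //; last first.
  by move=> m my; rewrite mem_undup map_cat mem_cat my orbT.
by apply: eq_bigr => m _; rewrite H.
Qed.

Lemma wsum_cat x y F : wsum (x ++ y) F = wsum x F + wsum y F.
Proof. by rewrite /wsum big_cat. Qed.

Lemma wsum_scale c x F : wsum [seq (c * t.1, t.2) | t <- x] F = c * wsum x F.
Proof. by rewrite /wsum big_map mulr_sumr; apply: eq_bigr => t _; rewrite mulrA. Qed.

Lemma gcoefE x m : gcoef x m = wsum x (fun m' => (m' == m)%:R).
Proof. by rewrite /gcoef /wsum big_mkcond; apply: eq_bigr => t _; case: eqP; rewrite ?mulr1 ?mulr0. Qed.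

Lemma wsum_nil F : wsum [::] F = 0.
Proof. by rewrite /wsum big_nil. Qed.

Lemma wsum_cons t x F : wsum (t :: x) F = t.1 * F t.2 + wsum x F.
Proof. by rewrite /wsum big_cons. Qed.

Lemma wsum_out x F : (forall t, t \in x -> F t.2 = 0) -> wsum x F = 0.
Proof. by move=> H; rewrite /wsum big1_seq // => t /andP[_ /H ->]; rewrite mulr0. Qed.

End Gen.
Section Strm.
Variable (E : eqType).
Local Open Scope nat_scope.
Implicit Types (f g : strm E) (l : seq E).

Fixpoint scat l f : strm E :=
  if l is e :: l' then (fun i => if i is i'.+1 then scat l' f i' else Some e) else f.
Definition sdrop (n : nat) f : strm E := fun i => f (i + n).
Fixpoint spref l f : bool :=
  if l is e :: l' then (f 0%N == Some e) && spref l' (sdrop 1 f) else true.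

Lemma scat_cat l1 l2 f : scat (l1 ++ l2) f = scat l1 (scat l2 f).
Proof. by elim: l1 => //= e l1 ->. Qed.

Lemma sdrop0 f : sdrop 0 f = f.
Proof. by apply: functional_extensionality => i; rewrite /sdrop addn0. Qed.

Lemma sdropD n m f : sdrop n (sdrop m f) = sdrop (m + n) f.
Proof. by apply: functional_extensionality => i; rewrite /sdrop -addnA (addnC n). Qed.

Lemma sdrop1_cons e l f : sdrop 1 (scat (e :: l) f) = scat l f.
Proof. by apply: functional_extensionality => i; rewrite /sdrop addn1. Qed.

Lemma sdrop_scat l f : sdrop (size l) (scat l f) = f.
Proof.
elim: l => [|e l IH]; first exact: sdrop0.
by change (size (e :: l)) with (1 + size l); rewrite -sdropD sdrop1_cons.
Qed.

Lemma spref_scat l f : spref l (scat l f).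
Proof. by elim: l => //= e l IH; rewrite eqxx sdrop1_cons IH. Qed.

Lemma sprefP l f : spref l f -> f = scat l (sdrop (size l) f).
Proof.
elim: l f => [|e l IH] f /=; first by rewrite sdrop0.
move=> /andP[/eqP f0 /IH H]; apply: functional_extensionality => -[|i] //=.
move: H; rewrite sdropD add1n => <-; by rewrite /sdrop addn1.
Qed.

Lemma spref_cat l1 l2 f : spref (l1 ++ l2) f = spref l1 f && spref l2 (sdrop (size l1) f).
Proof.
elim: l1 f => [|e l1 IH] f /=; first by rewrite sdrop0.
by rewrite IH sdropD add1n andbA.
Qed.

Lemma spref_cmp l1 l2 f : spref l1 (scat l2 f) -> prefix l1 l2 || prefix l2 l1.
Proof.
elim: l1 l2 => [|e l1 IH] [|e' l2] //=.
rewrite sdrop1_cons => /andP[/eqP [->] /IH].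
by rewrite eqxx.
Qed.

Lemma scat_inj l1 l2 f g : size l1 = size l2 -> scat l1 f = scat l2 g -> l1 = l2.
Proof.
elim: l1 l2 => [|e l1 IH] [|e' l2] //= [Hs] H.
have := congr1 (fun h => h 0%N) H => /= -[->]; congr cons; apply: IH => //.
apply: functional_extensionality => i.
exact: (congr1 (fun h => h i.+1) H).
Qed.

End Strm.
Section Main.
Variables (C : numClosedFieldType) (R : pred C).
Variables (V E : finType) (s r : E -> V).

Local Notation pthT := (pth V E).
Local Notation monoT := (mono V E).
Local Notation eltT := (elt C V E).
Local Notation goodm := (good s r).
Local Notation is_p := (is_pth s r).
Local Notation prg := (prange r).

Definition Bs := ((V * strm E) * int)%type.

Definition act (m : monoT) (b : Bs) : option Bs :=
  if (m.2.1 == b.1.1) && spref m.2.2 b.1.2 then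
    Some ((m.1.1, scat m.1.2 (sdrop (size m.2.2) b.1.2)),
          b.2 + (size m.1.2)%:Z - (size m.2.2)%:Z)
  else None.

Lemma act_mmul m1 m2 b :
  (if mmul m1 m2 is Some m then act m b else None) = obind (act m1) (act m2 b).
Proof.
case: m1 => [[a1 a2] [b1 b2]]; case: m2 => [[g1 g2] [d1 d2]]; case: b => [[v f] k].
rewrite /mmul /act /=.
case: ifP => [/andP[/eqP eb pre] | H1].
  move/prefixP: pre => [rest ->]; rewrite drop_size_cat //.
  case: ifP => //= _.
  rewrite eb eqxx /= !scat_cat spref_scat sdrop_scat.
  congr (Some (_, _)); rewrite !size_cat !PoszD; ring.
case: ifP => [/andP[/eqP eb pre] | H2].
  move/prefixP: pre => [rest ->]; rewrite drop_size_cat // spref_cat.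
  case: (d1 == v) => //=; case Hd: (spref d2 f) => //=.
  rewrite eb eqxx /= spref_cat spref_scat sdrop_scat /=.
  case Hr: (spref rest (sdrop (size d2) f)) => //=.
  have -> : sdrop (size (g2 ++ rest)) (scat g2 (sdrop (size d2) f)) = sdrop (size (d2 ++ rest)) f.
    by rewrite !size_cat -sdropD sdrop_scat sdropD.
  congr (Some (_, _)); rewrite !size_cat !PoszD; ring.
case: ifP => //= _.
case: ifP => //= /andP[/eqP eb /spref_cmp].
by move: H1 H2; rewrite eb eqxx /= => -> ->.
Qed.


Lemma is_pth_cons w e l : is_p (w, e :: l) = (s e == w) && is_p (r e, l).
Proof. by case: l => [|e' l]; rewrite /is_pth //= (eq_sym (r e)). Qed.

Lemma prange_cons w e l : prg (w, e :: l) = prg (r e, l).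
Proof. by case: l. Qed.

Lemma is_pth_cat v l1 l2 : is_p (v, l1 ++ l2) = is_p (v, l1) && is_p (prg (v, l1), l2).
Proof.
elim: l1 v => [|e l1 IH] v //=.
by rewrite -cat_cons !is_pth_cons IH prange_cons andbA.
Qed.

Lemma prange_cat v l1 l2 : prg (v, l1 ++ l2) = prg (prg (v, l1), l2).
Proof.
elim: l1 v => [|e l1 IH] v //=.
by rewrite -cat_cons !prange_cons IH.
Qed.

Lemma mmul_good m1 m2 m : goodm m1 -> goodm m2 -> mmul m1 m2 = Some m -> goodm m.
Proof.
case: m1 => [[a1 a2] [b1 b2]]; case: m2 => [[g1 g2] [d1 d2]].
rewrite /good /mmul /=.
move=> /and3P[pa pb /eqP eab] /and3P[pg pd /eqP egd].
case: ifP => [/andP[/eqP eb /prefixP[rest Hg]] | _].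
  move=> [<-] /=; subst g2 b1; rewrite drop_size_cat //.
  have /andP[_ pr] : is_p (g1, b2) && is_p (prg (g1, b2), rest) by rewrite -is_pth_cat.
  rewrite is_pth_cat pa pd /= eab pr /= prange_cat eab -egd prange_cat //.
case: ifP => [/andP[/eqP eb /prefixP[rest Hb]] | _] //.
move=> [<-] /=; subst b2 b1; rewrite drop_size_cat //.
have /andP[_ pr] : is_p (g1, g2) && is_p (prg (g1, g2), rest) by rewrite -is_pth_cat.
rewrite is_pth_cat pa pd /= -egd pr /= prange_cat eab prange_cat egd //.
Qed.

(* validity of boundary paths *)
Fixpoint vat (v : V) (f : strm E) (n : nat) : V :=
  if n is n'.+1 then (if f n' is Some e then r e else vat v f n') else v.

Definition okv (w : V) (o : option E) : bool :=
  if o is Some e then s e == w else [forall e, s e != w].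

Definition valid (b : V * strm E) : Prop := forall n, okv (vat b.1 b.2 n) (b.2 n).

Lemma vat_shift v f e n : f 0%N = Some e -> vat v f n.+1 = vat (r e) (sdrop 1 f) n.
Proof.
move=> f0; elim: n => [|n IH] /=; first by rewrite f0.
by rewrite -IH /sdrop addn1.
Qed.

Lemma valid_tail v f e : valid (v, f) -> f 0%N = Some e -> valid (r e, sdrop 1 f).
Proof.
move=> H f0 n; have Hn : okv (vat v f n.+1) (f n.+1) := H n.+1.
by move: Hn; rewrite (vat_shift _ _ f0) /= /sdrop addn1.
Qed.

Lemma valid_cons v f e : f 0%N = Some e -> s e = v -> valid (r e, sdrop 1 f) -> valid (v, f).
Proof.
move=> f0 se H [|n]; first by rewrite /= f0 /= se.
rewrite /= -/(vat v f n.+1) (vat_shift _ _ f0); have Hn : okv (vat (r e) (sdrop 1 f) n) (sdrop 1 f n) := H n.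
by move: Hn; rewrite /sdrop addn1.
Qed.

Lemma valid_drop v f l : valid (v, f) -> spref l f -> valid (prg (v, l), sdrop (size l) f).
Proof.
elim: l v f => [|e l IH] v f /=; first by rewrite sdrop0.
move=> H /andP[/eqP f0 Hl].
have := IH _ _ (valid_tail H f0) Hl.
by rewrite prange_cons sdropD add1n.
Qed.

Lemma valid_scat w l g : is_p (w, l) -> valid (prg (w, l), g) -> valid (w, scat l g).
Proof.
elim: l w => [|e l IH] w //=.
rewrite is_pth_cons prange_cons => /andP[/eqP se pl] H.
apply: (valid_cons (e := e)) => //.
by rewrite sdrop1_cons; apply: IH.
Qed.

Lemma act_valid m b b' : goodm m -> valid b.1 -> act m b = Some b' -> valid b'.1.
Proof.
case: m => [[a1 a2] [e1 e2]]; case: b => [[v f] k].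
rewrite /good /act /= => /and3P[pa pe /eqP eae] vb.
case: ifP => // /andP[/eqP ev sp] [<-] /=.
apply: valid_scat => //; rewrite eae ev.
exact: valid_drop.
Qed.

Lemma act_adj m b b' : act (m.2, m.1) b = Some b' -> act m b' = Some b.
Proof.
case: m => [[a1 a2] [e1 e2]]; case: b => [[v f] k].
rewrite /act /=; case: ifP => // /andP[/eqP av sp] [<-] /=.
rewrite eqxx spref_scat sdrop_scat /= -(sprefP sp) av.
congr (Some (_, _)); ring.
Qed.

Lemma act_adjE m b b' : (act (m.2, m.1) b == Some b') = (act m b' == Some b).
Proof.
apply/eqP/eqP; first exact: act_adj.
by case: m => a e; apply: (@act_adj (e, a) b' b).
Qed.

End Main.

Section Main2.
Variables (C : numClosedFieldType) (R : pred C).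
Variables (V E : finType) (s r : E -> V).

Local Notation pthT := (pth V E).
Local Notation monoT := (mono V E).
Local Notation eltT := (elt C V E).
Local Notation goodm := (good s r).
Local Notation is_p := (is_pth s r).
Local Notation prg := (prange r).
Local Notation BsT := (Bs V E).
Local Notation actm := (@act V E).
Local Notation validb := (valid s r).

Definition Mc (x : eltT) (b b' : BsT) : C :=
  wsum x (fun m => (goodm m && (actm m b == Some b'))%:R).

Definition outs (y : eltT) (b : BsT) : seq BsT :=
  undup (pmap (fun u : C * monoT => if goodm u.2 then actm u.2 b else None) y).

Lemma Mc_cat x y b b' : Mc (x ++ y) b b' = Mc x b b' + Mc y b b'.
Proof. exact: wsum_cat. Qed.

Lemma Mc_escale c x b b' : Mc (escale c x) b b' = c * Mc x b b'.
Proof. exact: wsum_scale. Qed.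

Lemma Mc_esub x y b b' : Mc (esub x y) b b' = Mc x b b' - Mc y b b'.
Proof. by rewrite /esub Mc_cat Mc_escale mulN1r. Qed.

Lemma Mc_coef x y : coef x =1 coef y -> forall b b', Mc x b b' = Mc y b b'.
Proof. by move=> H b b'; apply: wsum_eq. Qed.

Lemma good_swap (m : monoT) : goodm (m.2, m.1) = goodm m.
Proof. by rewrite /good /= andbCA eq_sym. Qed.

Lemma Mc_star x b b' : Mc (estar x) b b' = (Mc x b' b)^*.
Proof.
rewrite /Mc /wsum /estar big_map rmorph_sum; apply: eq_bigr => t _ /=.
rewrite rmorphM /= rmorph_nat; congr (_ * _%:R).
by rewrite -(good_swap t.2) act_adjE.
Qed.

Lemma Mc_tmul (t u : C * monoT) b b'' :
  wsum (tmul s r t u) (fun m => (goodm m && (actm m b == Some b''))%:R) =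
  t.1 * u.1 * (goodm t.2 && goodm u.2 && (obind (actm t.2) (actm u.2 b) == Some b''))%:R.
Proof.
rewrite /tmul; case gt: (goodm t.2); case gu: (goodm u.2) => /=;
  rewrite ?wsum_nil ?mulr0 //.
have := act_mmul t.2 u.2 b; case Em: (mmul t.2 u.2) => [m|] <-.
  by rewrite wsum_cons wsum_nil addr0 /= (mmul_good gt gu Em).
by rewrite wsum_nil mulr0.
Qed.

Lemma sum_outs y b (u : C * monoT) (G : BsT -> C) : u \in y ->
  \sum_(b' <- outs y b) ((goodm u.2 && (actm u.2 b == Some b'))%:R * G b') =
  if goodm u.2 then (if actm u.2 b is Some b0 then G b0 else 0) else 0.
Proof.
move=> uy; case gu: (goodm u.2) => /=; last by rewrite big1 // => i _; rewrite mul0r.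
case Ea: (actm u.2 b) => [b0|]; last by rewrite big1 // => i _; rewrite mul0r.
have b0in : b0 \in outs y b.
  by rewrite mem_undup mem_pmap; apply/mapP; exists u => //; rewrite gu Ea.
rewrite (bigD1_seq b0) ?undup_uniq //= eqxx mul1r big1 ?addr0 // => i Hi.
rewrite (_ : (Some b0 == Some i) = false) ?mul0r //.
by apply/eqP => -[Ei]; rewrite Ei eqxx in Hi.
Qed.

Lemma Mc_mul x y b b'' :
  Mc (emul s r x y) b b'' = \sum_(b' <- outs y b) Mc y b b' * Mc x b' b''.
Proof.
have -> : Mc (emul s r x y) b b'' = \sum_(t <- x) \sum_(u <- y)
    wsum (tmul s r t u) (fun m => (goodm m && (actm m b == Some b''))%:R).
  by rewrite /Mc /emul {1}/wsum big_flatten /= big_allpairs_dep.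
under eq_bigr => t _ do under eq_bigr => u _ do rewrite Mc_tmul.
rewrite exchange_big /=.
rewrite [RHS](eq_bigr (fun b' => \sum_(u <- y)
   (goodm u.2 && (actm u.2 b == Some b'))%:R * (u.1 * Mc x b' b''))); last first.
  by move=> b' _; rewrite /Mc {1}/wsum mulr_suml; apply: eq_bigr => u _; ring.
rewrite [RHS]exchange_big /=; apply: eq_big_seq => u uy.
rewrite sum_outs //.
case gu: (goodm u.2); last by rewrite big1 // => t _; rewrite andbF mulr0.
case Ea: (actm u.2 b) => [b0|] /=; last by rewrite big1 // => t _; rewrite andbF mulr0.
rewrite /Mc /wsum mulr_sumr; apply: eq_bigr => t _; rewrite andbT; ring.
Qed.


Lemma outs_valid y b b' : validb b.1 -> b' \in outs y b -> validb b'.1.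
Proof.
move=> vb; rewrite mem_undup mem_pmap => /mapP[u _].
case gu: (goodm u.2) => //; move/esym => Ea.
exact: act_valid gu vb Ea.
Qed.

Lemma Mc_ck2 v b b' : [exists e, s e == v] -> validb b.1 -> Mc (ck2 C s v) b b' = 0.
Proof.
case: b => [[w f] k] /= Hv vb; rewrite /Mc /ck2 wsum_cons.
have gv : goodm ((v, [::]), (v, [::])) by rewrite /good /= eqxx.
rewrite gv /= /act /= andbT sdrop0 addr0 subr0.
have ge : forall e, s e == v -> goodm ((v, [:: e]), (v, [:: e])).
  by move=> e se; rewrite /good /is_pth /= se eqxx.
have [vw | nvw] := eqVneq v w; last first.
  rewrite /= mulr0 add0r wsum_out // => t /mapP[e _ ->] /=.
  by rewrite /act /= (negbTE nvw) andbF.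
subst w => /=.
have := vb 0%N; rewrite /= /okv.
case f0: (f 0%N) => [e0|] /=; last by move=> /forallP H; case/existsP: Hv => e1; rewrite (negbTE (H e1)).
move=> /eqP se0.
rewrite /wsum big_map big_filter big_mkcond /=.
rewrite (bigD1_seq e0) ?mem_enum ?enum_uniq //= se0 eqxx.
rewrite ge ?se0 // f0 eqxx /=.
have -> : (fun i : nat => match i with 0%N => Some e0 | i'.+1 => sdrop 1 f i' end) = f.
  by apply: functional_extensionality => -[|i] //; rewrite /sdrop addn1.
rewrite addrK big1 ?addr0; first by rewrite mulN1r mul1r subrr.
move=> e ne; case: ifP => // se; rewrite ge //.
by rewrite (_ : (Some e0 == Some e) = false) ?mulr0 //; apply/eqP => -[Ee]; rewrite Ee eqxx in ne.
Qed.

Lemma LI_Mc x : LI R s r x -> forall b, validb b.1 -> forall b', Mc x b b' = 0.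
Proof.
elim => {x} [v Hv | c m Hm | x y _ IHx _ IHy | c x _ _ IH | a x _ _ IH | x a _ _ IH | x y Hc _ IH] b vb b'.
- exact: Mc_ck2.
- by rewrite /Mc wsum_cons wsum_nil (negbTE Hm) /= mulr0 addr0.
- by rewrite /eadd Mc_cat IHx // IHy // addr0.
- by rewrite Mc_escale IH // mulr0.
- by rewrite Mc_mul big1 // => b'' _; rewrite IH // mul0r.
- rewrite Mc_mul big1_seq // => b'' /andP[_ Hin].
  by rewrite IH ?mulr0 //; exact: outs_valid Hin.
- by rewrite -(Mc_coef Hc) IH.
Qed.

End Main2.

Section Main3.
Variables (C : numClosedFieldType) (R : pred C).
Variables (V E : finType) (s r : E -> V).
Hypothesis HRsub : subring_closed R.
Hypothesis HRconj : forall x, x \in R -> x^* \in R.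
Hypothesis HR : eupu R.

Local Notation monoT := (mono V E).
Local Notation eltT := (elt C V E).
Local Notation goodm := (good s r).
Local Notation BsT := (Bs V E).
Local Notation actm := (@act V E).
Local Notation validb := (valid s r).
Local Notation Mcs := (Mc s r).

Lemma R1 : 1 \in R. Proof. by case: HRsub. Qed.
Lemma RB x y : x \in R -> y \in R -> x - y \in R. Proof. by case: HRsub => _ H _; apply: H. Qed.
Lemma RM x y : x \in R -> y \in R -> x * y \in R. Proof. by case: HRsub => _ _ H; apply: H. Qed.
Lemma R0 : 0 \in R. Proof. by rewrite -(subrr 1) RB ?R1. Qed.
Lemma RN x : x \in R -> - x \in R. Proof. by move=> Hx; rewrite -sub0r RB ?R0. Qed.
Lemma RD x y : x \in R -> y \in R -> x + y \in R.
Proof. by move=> Hx Hy; rewrite -(opprK y) RB ?RN. Qed.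

Lemma wsum_R (T : eqType) (x : seq (C * T)) F : all (fun t => t.1 \in R) x ->
  (forall m, F m \in R) -> wsum x F \in R.
Proof.
move=> Hx HF; rewrite /wsum; elim: x Hx => [|t x IH] /=; first by rewrite big_nil R0.
by move=> /andP[Ht Hx]; rewrite big_cons RD ?RM ?IH.
Qed.

Lemma Mc_R x b b' : Rcomb R x -> Mcs x b b' \in R.
Proof.
move=> Hx; apply: wsum_R => // m; case: (_ && _); first exact: R1.
exact: R0.
Qed.

Lemma eupu_seq (L : seq C) : all (fun x => x \in R) L -> \sum_(x <- L) `|x| ^+ 2 = 1 ->
  exists i, forall j, (j < size L)%N -> j != i -> nth 0 L j = 0.
Proof.
move=> HL Hs.
have H1 : forall i : 'I_(size L), nth 0 L i \in R.
  by move=> i; apply: (all_nthP 0 HL); apply: ltn_ord.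
have H2 : \sum_(i < size L) `|nth 0 L i| ^+ 2 = 1.
  by rewrite -(big_mkord xpredT (fun i => `|nth 0 L i| ^+ 2)) -(big_nth 0 xpredT (fun x => `|x| ^+ 2)).
have [i Hi] := HR H1 H2.
exists (val i) => j jL ji; apply: (Hi (Ordinal jL)).
by apply: contra ji => /eqP <-.
Qed.


Lemma Mc_leq x y : leq_eq R s r x y -> forall b, validb b.1 -> forall b', Mcs x b b' = Mcs y b b'.
Proof.
move=> Hxy b vb b'; apply/eqP; rewrite -subr_eq0 -Mc_esub; apply/eqP.
exact: (LI_Mc Hxy).
Qed.

Lemma diag_act p : Rcomb R p -> leq_eq R s r (emul s r p p) p -> leq_eq R s r (estar p) p ->
  forall xi, validb xi.1 -> forall b, b != xi -> Mcs p xi b = 0.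
Proof.
move=> Rp Hpp Hps xi vxi.
pose c := fun b => Mcs p xi b.
pose s0 := outs s r p xi.
have Hout : forall b, b \notin s0 -> c b = 0.
  move=> b bn; rewrite /c /Mc wsum_out // => t tp.
  case gt: (goodm t.2) => //=; case: eqP => // Ea.
  by move: bn; rewrite mem_undup mem_pmap; case/negP; apply/mapP; exists t => //; rewrite gt Ea.
have Hxi : c xi = \sum_(b <- s0) `|c b| ^+ 2.
  rewrite /c -(Mc_leq Hpp) // Mc_mul; apply: eq_big_seq => b bs0.
  rewrite normCK; congr (_ * _).
  by rewrite -(Mc_leq Hps (outs_valid vxi bs0)) Mc_star.
have ge0 : 0 <= c xi by rewrite Hxi sumr_ge0 // => b _; rewrite exprn_ge0.
have cj : (c xi)^* = c xi := geC0_conj ge0.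
pose s1 := [seq b <- s0 | b != xi].
have n0 : `|c xi| ^+ 2 = c xi ^+ 2 by rewrite normCK cj expr2.
have Hsplit : c xi = c xi ^+ 2 + \sum_(b <- s1) `|c b| ^+ 2.
  rewrite big_filter -n0; case: (boolP (xi \in s0)) => xin.
    by rewrite {1}Hxi (bigD1_seq xi) ?undup_uniq.
  rewrite {1}Hxi (Hout _ xin) normr0 expr0n /= add0r.
  rewrite [RHS]big_seq_cond [LHS]big_seq; apply: eq_bigl => b.
  case: (boolP (b \in s0)) => //= bin; case: eqP => // Eb.
  by move: bin; rewrite Eb (negbTE xin).
pose L := [seq c b | b <- s1] ++ [seq c b | b <- s1] ++ [:: c xi; 1 - c xi].
have LR : all (fun x => x \in R) L.
  have cR : forall b, c b \in R by move=> b; apply: Mc_R.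
  rewrite /L !all_cat /= !andbT; apply/and4P; split; try (apply/allP => x /mapP[b _ ->]; exact: cR).
    exact: cR.
  by apply: RB; [exact: R1 | exact: cR].
have Ls : \sum_(x <- L) `|x| ^+ 2 = 1.
  rewrite /L !big_cat !big_map /= !big_cons big_nil addr0.
  set S' := \sum_(b <- s1) _.
  have n1 : `|1 - c xi| ^+ 2 = (1 - c xi) ^+ 2.
    by rewrite normCK conj_Creal ?expr2 // rpredB ?real1 ?ger0_real.
  rewrite n1 n0; have HS : S' = c xi - c xi ^+ 2 by rewrite {1}Hsplit -/S'; ring.
  rewrite HS; ring.
have [i Hi] := eupu_seq LR Ls.
move=> b bxi; case: (boolP (b \in s0)) => bs0; last exact: Hout.
have bs1 : b \in s1 by rewrite mem_filter bxi.
pose j := index b s1.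
have js : (j < size s1)%N by rewrite index_mem.
have sL : size L = (size s1 + (size s1 + 2))%N by rewrite /L !size_cat !size_map.
have e1 : nth 0 L j = c b by rewrite /L nth_cat size_map js (nth_map b) // nth_index.
have e2 : nth 0 L (size s1 + j) = c b.
  rewrite /L nth_cat size_map ltnNge leq_addr /= addKn nth_cat size_map js.
  by rewrite (nth_map b) // nth_index.
change (c b = 0); have [ji | ji] := eqVneq j i.
  rewrite -e2; apply: Hi; first by rewrite sL ltn_add2l (leq_trans js) // leq_addr.
  by rewrite -ji -{2}(add0n j) eqn_add2r -lt0n (leq_ltn_trans _ js).
by rewrite -e1; apply: Hi => //; rewrite sL (leq_trans js) // leq_addr.
Qed.

End Main3.

Section Main4.
Variables (C : numClosedFieldType) (R : pred C).
Variables (V E : finType) (s r : E -> V).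
Hypothesis HRsub : subring_closed R.
Hypothesis LI0 : LI R s r [::].

Local Notation monoT := (mono V E).
Local Notation eltT := (elt C V E).
Local Notation goodm := (good s r).
Local Notation is_p := (is_pth s r).
Local Notation prg := (prange r).
Local Notation LIs := (LI R s r).

Lemma coef_cat (x y : eltT) m : coef (x ++ y) m = coef x m + coef y m.
Proof. by rewrite /coef big_cat. Qed.

Lemma coef_escale c (x : eltT) m : coef (escale c x) m = c * coef x m.
Proof. by rewrite /coef big_map mulr_sumr. Qed.

Lemma coef_esub (x y : eltT) m : coef (esub x y) m = coef x m - coef y m.
Proof. by rewrite /esub coef_cat coef_escale mulN1r. Qed.

Lemma coef_nil m : coef ([::] : eltT) m = 0.
Proof. by rewrite /coef big_nil. Qed.

Lemma coef_filter (P : pred monoT) (x : eltT) m :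
  coef [seq t <- x | P t.2] m = if P m then coef x m else 0.
Proof.
rewrite /coef big_filter_cond.
case: ifP => Pm.
  by apply: eq_bigl => t; case: eqP => [->|]; rewrite ?Pm ?andbF.
by rewrite big_pred0 // => t; case: eqP => [->|]; rewrite ?Pm ?andbF.
Qed.

Lemma LI_refl (x : eltT) : LIs (esub x x).
Proof. by apply: (LI_coef _ LI0) => m; rewrite coef_esub subrr coef_nil. Qed.

Lemma LI_trans (x y z : eltT) : LIs (esub x y) -> LIs (esub y z) -> LIs (esub x z).
Proof.
move=> H1 H2; apply: (LI_coef _ (LI_add H1 H2)) => m.
by rewrite /eadd coef_cat !coef_esub subrKA.
Qed.

Lemma LI_catsub (x1 y1 x2 y2 : eltT) :
  LIs (esub x1 y1) -> LIs (esub x2 y2) -> LIs (esub (x1 ++ x2) (y1 ++ y2)).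
Proof.
move=> H1 H2; apply: (LI_coef _ (LI_add H1 H2)) => m.
rewrite /eadd coef_cat !coef_esub !coef_cat; ring.
Qed.

Lemma LI_flat (l : eltT) (F : C * monoT -> eltT) :
  (forall t, t \in l -> LIs (esub [:: t] (F t))) -> LIs (esub l (flatten (map F l))).
Proof.
elim: l => [|t l IH] H /=; first exact: LI0.
rewrite -cat1s; apply: LI_catsub; first by apply: H; rewrite mem_head.
by apply: IH => t' t'l; apply: H; rewrite in_cons t'l orbT.
Qed.

Definition ext1 (m : monoT) (e : E) : monoT := ((m.1.1, m.1.2 ++ [:: e]), (m.2.1, m.2.2 ++ [:: e])).
Definition sink (w : V) : bool := [forall e, s e != w].

Lemma good_ext1 m e : goodm m -> s e == prg m.2 -> goodm (ext1 m e).
Proof.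
case: m => [[a1 a2] [b1 b2]]; rewrite /good /ext1 /= => /and3P[pa pb /eqP ab] se.
rewrite !is_pth_cat pa pb ab /= !prange_cat ab eqxx andbT.
by rewrite /is_pth /= se.
Qed.

Lemma LI_step (l : C) (m : monoT) : l \in R -> goodm m -> ~~ sink (prg m.2) ->
  LIs (esub [:: (l, m)] [seq (l, ext1 m e) | e <- enum E & s e == prg m.2]).
Proof.
case: m => [[a1 a2] [b1 b2]] /= lR gm nsk.
have Hv : [exists e, s e == prg (b1, b2)].
  by move: nsk; rewrite /sink negb_forall => /existsP[e]; rewrite negbK => ?; apply/existsP; exists e.
have Ra : Rcomb R [:: (l, ((a1, a2), (prg (b1, b2), [::])))] by rewrite /Rcomb /= lR.
have Rb : Rcomb R [:: (1, ((prg (b1, b2), [::]), (b1, b2)))] by rewrite /Rcomb /= (R1 HRsub).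
have H := LI_lmul Ra (LI_rmul Rb (LI_ck2 R r Hv)).
move: gm; rewrite /good /= => /and3P[pa pb /eqP ab].
move: H; rewrite /emul allpairs1r /ck2 /=.
set w := prg (b1, b2).
have T1 : tmul s r ((1 : C), ((w, [::]), (w, [::]))) ((1 : C), ((w, [::]), (b1, b2))) = [:: (1 * 1, ((w, [::]), (b1, b2)))].
  by rewrite /tmul /good /= pb !eqxx.
have T2 : flatten [seq tmul s r x ((1 : C), ((w, [::]), (b1, b2))) | x <- [seq ((-1 : C), ((w, [:: e]), (w, [:: e]))) | e <- enum E & s e == w]]
    = [seq (-1 * 1, ((w, [:: e]), (b1, b2 ++ [:: e]))) | e <- enum E & s e == w].
  rewrite -map_comp -[RHS]flatten_map1; apply: (congr1 flatten); apply/eq_in_map => e; rewrite mem_filter => /andP[se _].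
  by rewrite /tmul /good /= pb !eqxx /= /is_pth /= se.
rewrite T1 T2 /=.
have T3 : tmul s r (l, ((a1, a2), (w, [::]))) (1 * 1, ((w, [::]), (b1, b2))) = [:: (l * (1 * 1), ((a1, a2), (b1, b2)))].
  by rewrite /tmul /good /= pb pa ab !eqxx /= cats0.
rewrite T3 cats0.
have T4 : {in [seq e <- enum E | s e == w], (tmul s r (l, ((a1, a2), (w, [::])))) \o (fun e => (-1 * 1, ((w, [:: e]), (b1, b2 ++ [:: e])))) =1 fun e => [:: (l * (-1 * 1), ext1 ((a1, a2), (b1, b2)) e)]}.
  move=> e; rewrite mem_filter => /andP[se _] /=.
  by rewrite /tmul /good /= pa ab !eqxx /= is_pth_cat pb prange_cat /= /is_pth /= se /= /w eqxx.
move/eq_in_map: T4 => T4.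
rewrite -map_comp T4 flatten_map1 => H; apply: (LI_coef _ H) => m'.
congr coef; rewrite /esub /escale -map_comp !mulr1 mulrN1 /=; congr cons.
by apply/eq_map => e /=; rewrite mulN1r.
Qed.


Fixpoint expand (n : nat) (t : C * monoT) : eltT :=
  if n is n'.+1 then
    (if goodm t.2 && ~~ sink (prg t.2.2) then
       flatten [seq expand n' (t.1, ext1 t.2 e) | e <- enum E & s e == prg t.2.2]
     else [:: t])
  else [:: t].

Lemma LI_expand n t : t.1 \in R -> LIs (esub [:: t] (expand n t)).
Proof.
elim: n t => [|n IH] [l m] /= lR; first exact: LI_refl.
case: ifP => [/andP[gm nsk] | _]; last exact: LI_refl.
apply: LI_trans (LI_step lR gm nsk) _.
rewrite (_ : flatten _ = flatten (map (expand n) [seq (l, ext1 m e) | e <- enum E & s e == prg m.2])); last by rewrite -map_comp.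
by apply: LI_flat => t /mapP[e _ ->]; apply: IH.
Qed.

Lemma expand_R n t : all (fun t' => t'.1 == t.1) (expand n t).
Proof.
elim: n t => [|n IH] t /=; first by rewrite eqxx.
case: ifP => _; last by rewrite /= eqxx.
apply/allP => t' /flattenP[l /mapP[e _ ->] t'l].
by have /eqP -> := allP (IH _) _ t'l.
Qed.

Lemma expand_bad n t : ~~ goodm t.2 -> expand n t = [:: t].
Proof. by case: n => //= n /negbTE ->. Qed.

Lemma expand_Q n t : goodm t.2 -> forall t', t' \in expand n t -> goodm t'.2 ->
  (size t'.2.2.2 <= size t.2.2.2 + n)%N && ((size t'.2.2.2 < size t.2.2.2 + n)%N ==> sink (prg t'.2.2)).
Proof.
elim: n t => [|n IH] t gt t' /=.
  by rewrite inE => /eqP -> _; rewrite addn0 leqnn ltnn.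
case: ifP => [/andP[_ nsk] | nsk].
  move=> /flattenP[l /mapP[e] + -> t'l]; rewrite mem_filter => /andP[se _] gt'.
  have := IH (t.1, ext1 t.2 e) (good_ext1 gt se) t' t'l gt'.
  by rewrite /= size_cat addn1 addSnnS.
rewrite inE => /eqP -> _; rewrite gt /= in nsk; move/negbFE: nsk => ->.
by rewrite leq_addr implybT.
Qed.

Definition nxt (w : V) : option E := [pick e | s e == w].
Fixpoint vseq (w : V) (n : nat) : V :=
  if n is n'.+1 then (if nxt (vseq w n') is Some e then r e else vseq w n') else w.
Definition bp (w : V) : strm E := fun n => nxt (vseq w n).

Lemma bp_valid w : valid s r (w, bp w).
Proof.
have Hv : forall n, vat r w (bp w) n = vseq w n by elim => //= n ->.
move=> n; rewrite /okv /= Hv /bp /nxt; case: pickP => [e /eqP -> | H] //=.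
by apply/forallP => e; rewrite H.
Qed.

End Main4.

Section Final.
Variables (C : numClosedFieldType) (R : pred C).
Variables (V E : finType) (s r : E -> V).
Hypothesis HRsub : subring_closed R.
Hypothesis HR : eupu R.
Variable p : elt C V E.
Hypothesis Rp : Rcomb R p.
Hypothesis Hpp : leq_eq R s r (emul s r p p) p.
Hypothesis Hps : leq_eq R s r (estar p) p.

Local Notation monoT := (mono V E).
Local Notation eltT := (elt C V E).
Local Notation goodm := (good s r).
Local Notation is_p := (is_pth s r).
Local Notation prg := (prange r).
Local Notation LIs := (LI R s r).

Lemma LI0 : LIs [::].
Proof.
apply: (LI_coef _ (LI_scale (R0 HRsub) Hpp)) => m.
by rewrite coef_escale mul0r coef_nil.
Qed.

Definition N := \max_(t <- p) size t.2.2.2.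
Definition q : eltT := flatten [seq expand s r (N - size t.2.2.2) t | t <- p].

Lemma q_LI : LIs (esub p q).
Proof.
apply: (LI_flat LI0) => t tp; apply: (LI_expand HRsub LI0).
exact: (allP Rp t tp).
Qed.

Lemma q_R : Rcomb R q.
Proof.
apply/allP => t' /flattenP[l /mapP[t tp ->] t'l].
have /eqP -> := allP (expand_R _ _ _ _) _ t'l.
exact: (allP Rp t tp).
Qed.

Lemma q_Q t' : t' \in q -> goodm t'.2 ->
  (size t'.2.2.2 <= N)%N && ((size t'.2.2.2 < N)%N ==> sink s (prg t'.2.2)).
Proof.
move=> /flattenP[l /mapP[t tp ->] t'l] gt'.
case gt: (goodm t.2); last first.
  by move: t'l; rewrite expand_bad ?gt // inE => /eqP Et; rewrite Et gt in gt'.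
have HN : (size t.2.2.2 <= N)%N.
  exact: (@leq_bigmax_seq _ p xpredT (fun t => size t.2.2.2)).
by have := expand_Q gt t'l gt'; rewrite subnKC.
Qed.

Lemma coef_has (x : eltT) m : coef x m != 0 -> has (fun t => t.2 == m) x.
Proof.
apply: contraR => /hasPn H; rewrite /coef big1_seq // => t /andP[tm tx].
by rewrite (negbTE (H t tx)) in tm.
Qed.

Lemma extract_step m0 : goodm m0 -> m0.1 != m0.2 ->
  (forall m, goodm m -> m.1 != m.2 -> (size m.2.2 < size m0.2.2)%N -> coef q m = 0) ->
  coef q m0 = 0.
Proof.
case: m0 => [[a1 a2] [b1 b2]] gm0 nd IH; rewrite /= in nd IH.
apply/eqP; apply/negPn/negP => cnz.
have Q0 : (size b2 <= N)%N && ((size b2 < N)%N ==> sink s (prg (b1, b2))).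
  by have /hasP[t tq /eqP tm] := coef_has cnz; have := q_Q tq; rewrite tm; apply.
case/and3P: (gm0) => /= pa pb /eqP ab.
set w := prg (b1, b2).
set eps := bp s r w.
pose xi : Bs V E := ((b1, scat b2 eps), 0).
pose bst : Bs V E := ((a1, scat a2 eps), (size a2)%:Z - (size b2)%:Z).
have vxi : valid s r xi.1 := valid_scat pb (bp_valid s r w).
have act0 : act ((a1, a2), (b1, b2)) xi = Some bst.
  by rewrite /act /= eqxx spref_scat sdrop_scat add0r.
have nxi : bst != xi.
  apply/eqP => -[Ea Es Ez].
  have Hs : size a2 = size b2 by apply/eqP; rewrite -eqz_nat -subr_eq0 Ez.
  have E2 := scat_inj Hs Es.
  by rewrite Ea E2 eqxx in nd.
have Mq : Mc s r q xi bst = 0.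
  rewrite -(Mc_leq q_LI vxi).
  exact: (diag_act HRsub HR Rp Hpp Hps vxi nxi).
have m0in : ((a1, a2), (b1, b2)) \in undup (map snd q).
  rewrite mem_undup; have /hasP[t tq /eqP tm] := coef_has cnz.
  by apply/mapP; exists t.
have Hsub : {subset map snd q <= undup (map snd q)} by move=> m; rewrite mem_undup.
move: Mq; rewrite /Mc (@wsum_uniq _ _ _ (undup (map snd q)) _ (undup_uniq _) Hsub).
rewrite (bigD1_seq _ m0in (undup_uniq _)) /= gm0 act0 eqxx mulr1 big1_seq ?addr0.
  by move=> /eqP; rewrite (negbTE cnz).
move=> m /andP[nm min].
case gm: (goodm m); last by rewrite mulr0.
case: eqP => Hact; last by rewrite mulr0.
have Qm : (size m.2.2 <= N)%N.
  move: min; rewrite mem_undup => /mapP[t tq tm].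
  have gt : goodm t.2 by rewrite -tm.
  by have /andP[H1 _] := q_Q tq gt; rewrite tm.
move: m nm min gm Hact Qm => [[c1 c2] [d1 d2]] nm min gm /=.
rewrite /act /bst /xi /=; case: ifP => // /andP[/eqP d1b1 sp] [Ec1 Escat Ez] Qm.
have [pdb | npdb] := boolP (prefix d2 b2).
  move/prefixP: pdb => [rho Eb2].
  move: Escat; rewrite {1}Eb2 scat_cat sdrop_scat -scat_cat => Escat.
  have Hs : size (c2 ++ rho) = size a2.
    move: Ez; rewrite Eb2 !size_cat PoszD => Ez.
    have H : (size c2)%:Z + (size rho)%:Z = (size a2)%:Z.
      have -> : (size a2)%:Z = ((size a2)%:Z - ((size d2)%:Z + (size rho)%:Z)) + ((size d2)%:Z + (size rho)%:Z) by ring.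
      rewrite -Ez; ring.
    by move/eqP: H; rewrite -PoszD eqz_nat => /eqP.
  have Ea2 := scat_inj Hs Escat.
  case: rho Eb2 Ea2 {Hs Escat} => [|e rho] Eb2 Ea2.
    rewrite cats0 in Eb2; rewrite cats0 in Ea2.
    by move: nm; rewrite -Ea2 Eb2 Ec1 d1b1 eqxx.
  change (coef q ((c1, c2), (d1, d2)) * 1 = 0).
  rewrite (IH ((c1, c2), (d1, d2))) ?mul0r //=.
    apply/eqP => -[E1 E2]; move: nd.
    by rewrite -Ea2 Eb2 -Ec1 E1 E2 d1b1 eqxx.
  by rewrite Eb2 size_cat -addn1 leq_add2l.
have /prefixP[rho Ed2] : prefix b2 d2 by move: (spref_cmp sp); rewrite (negbTE npdb).
case: rho Ed2 => [|e rho] Ed2.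
  by rewrite Ed2 cats0 prefix_refl in npdb.
move: sp; rewrite Ed2 spref_cat spref_scat sdrop_scat /=; case/andP => /eqP eps0 _.
have se : s e == w by have := bp_valid s r w 0%N; rewrite /= /okv -/eps eps0.
move: Q0; rewrite -/w; have -> : sink s w = false.
  by apply/negbTE; rewrite /sink negb_forall; apply/existsP; exists e; rewrite negbK.
rewrite implybF -leqNgt => /andP[Hb HNb].
have : (N < size d2)%N by rewrite Ed2 size_cat /= (leq_ltn_trans HNb) // addnS ltnS leq_addr.
by rewrite ltnNge Qm.
Qed.

Lemma extract m0 : goodm m0 -> m0.1 != m0.2 -> coef q m0 = 0.
Proof.
move: {2}(size m0.2.2) (leqnn (size m0.2.2)) => n.
elim: n m0 => [|n IH] m0 Hn g nd; apply: extract_step => // m gm ndm lt.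
  by move: (leq_trans lt Hn).
by apply: IH => //; rewrite -ltnS (leq_trans lt Hn).
Qed.

Lemma LI_badpart (l : eltT) : LIs [seq t <- l | ~~ goodm t.2 && (t.2.1 != t.2.2)].
Proof.
elim: l => [|[c m] l IH] /=; first exact: LI0.
case: ifP => // /andP[bm _].
exact: (LI_add (LI_bad R c bm) IH).
Qed.

Lemma final : in_diagonal R s r p.
Proof.
exists [seq t <- q | t.2.1 == t.2.2]; split.
  apply/allP => t; rewrite mem_filter => /andP[Hd tq].
  by rewrite Hd andbT; exact: (allP q_R t tq).
rewrite /leq_eq; apply: (LI_trans q_LI).
apply: (LI_coef _ (LI_badpart q)) => m.
rewrite coef_esub (coef_filter (fun m => ~~ goodm m && (m.1 != m.2))) (coef_filter (fun m => m.1 == m.2)).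
case: (eqVneq m.1 m.2) => /= Hd; first by rewrite andbF subrr.
case gm: (goodm m) => /=; last by rewrite subr0.
by rewrite (extract gm Hd) subrr.
Qed.

End Final.

Theorem corollary5p7 (C : numClosedFieldType) (R : pred C)
  (HRsub : subring_closed R) (HRconj : forall x, x \in R -> x^* \in R)
  (HR : eupu R)
  (V E : finType) (s r : E -> V) (p : elt C V E) :
  is_projection R s r p -> in_diagonal R s r p.
Proof.
by move=> [Rp [Hpp Hps]]; exact: (final HRsub HR Rp Hpp Hps).
Qed.
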